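(* Let $\mathbb{K}$ be a field and $s\geq 3$ an integer. Let $f=\sum_{i=0}^n a_ix_s^i\in\mathbb{K}[x_1,\ldots,x_s]$ with $n\geq 2$, $a_0,\ldots,a_n\in\mathbb{K}[x_1,\ldots,x_{s-1}]$, $a_0a_n\neq 0$. Assume that $f$ has no nonconstant factor in $\mathbb{K}[x_1,\ldots,x_{s-1}]$. If there exists an index $j$ with $0\leq j\leq n-1$ such that $$\deg_{s-1}a_j>\max_{i\neq j}\{\deg_{s-1}a_i+(j-i)\deg_{s-1}a_n\},$$ then $f$ is a product of at most $n-j$ irreducible polynomials over $\mathbb{K}[x_1,\ldots,x_{s-1}]$. In particular, if $j=n-1$, then $f$ is irreducible over $\mathbb{K}[x_1,\ldots,x_{s-1}]$.
   Context: For a polynomial $g\in\mathbb{K}[x_1,\ldots,x_r]$, $\deg_r g$ denotes the degree of $g$ viewed as a polynomial in $x_r$ with coefficients in $\mathbb{K}[x_1,\ldots,x_{r-1}]$. $f$ is regarded as a polynomial in $x_s$ with coefficients in $\mathbb{K}[x_1,\ldots,x_{s-1}]$, and ''a product of at most $k$ irreducible polynomials over $\mathbb{K}[x_1,\ldots,x_{s-1}]$'' means that its factorization into irreducibles of $\mathbb{K}[x_1,\ldots,x_{s-1}][x_s]$ has at most $k$ factors counted with multiplicities. *)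

(* Defs.v *)
From HB Require Import structures.
From mathcomp Require Import all_boot all_order all_algebra.
Set Implicit Arguments. Unset Strict Implicit. Unset Printing Implicit Defensive.
Import Order.TTheory GRing.Theory Num.Theory.
Local Open Scope ring_scope.

(* K[x_1,...,x_m] as iterated univariate polynomials:
   mpolyK K 0 = K,  mpolyK K m.+1 = (mpolyK K m)[x_{m+1}]. *)
Fixpoint mpolyK (K : fieldType) (m : nat) : idomainType :=
  if m is m'.+1 then ({poly mpolyK K m'} : idomainType) else (K : idomainType).

Fixpoint mconst (K : fieldType) (m : nat) : mpolyK K m -> bool :=
  match m return mpolyK K m -> bool with
  | 0 => fun _ => true
  | m'.+1 => fun p : {poly mpolyK K m'} => (size p <= 1)%N && mconst p`_0
  end.

Definition irreducible_elt (R : idomainType) (p : R) : Prop :=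
  [/\ p != 0, ~~ (p \is a GRing.unit) &
      forall q r : R, p = q * r -> q \is a GRing.unit \/ r \is a GRing.unit].

Definition degv (R : idomainType) (a : {poly R}) : nat := (size a).-1.

(* Main.v *)
Require Import Defs.
From HB Require Import structures.
From mathcomp Require Import all_boot all_order all_algebra.
From mathcomp Require Import zify.
From Stdlib Require Import Classical.
Import Order.TTheory GRing.Theory Num.Theory.
Set Implicit Arguments. Unset Strict Implicit. Unset Printing Implicit Defensive.
Local Open Scope ring_scope.

Section Key.
Variable B : idomainType.
Implicit Types (g h u : {poly {poly B}}).

Definition Rw (d : nat) g : {poly {poly B}} :=
  \poly_(i < size g) (g`_i * 'X^(((size g).-1 - i) * d)).

Lemma coef_Rw d g i : (Rw d g)`_i = g`_i * 'X^(((size g).-1 - i) * d).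
Proof.
rewrite /Rw coef_poly; case: ltnP => // hi.
by rewrite nth_default // mul0r.
Qed.

Lemma size_Rw d g : (size (Rw d g) <= size g)%N.
Proof. exact: size_poly. Qed.

Lemma Rw_neq0 d g : g != 0 -> Rw d g != 0.
Proof.
move=> g0; apply/eqP => h0.
have := congr1 (fun p : {poly {poly B}} => p`_(size g).-1) h0 => /=.
rewrite coef_Rw subnn mul0n expr0 mulr1 coef0 => /eqP.
by rewrite -lead_coefE lead_coef_eq0 (negbTE g0).
Qed.

Lemma coef_lt_size (p : {poly {poly B}}) i : p`_i != 0 -> (i < size p)%N.
Proof. by apply: contraR; rewrite -leqNgt => /(nth_default 0) ->. Qed.

Lemma RwM d g h : g != 0 -> h != 0 -> Rw d (g * h) = Rw d g * Rw d h.
Proof.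
move=> g0 h0; apply/polyP => k.
rewrite coef_Rw size_mul // coefM big_distrl /= coefM.
apply: eq_bigr => [[i /=]]; rewrite ltnS => lik _.
rewrite !coef_Rw.
have [->|gi0] := eqVneq g`_i 0; first by rewrite !mul0r.
have [->|hi0] := eqVneq h`_(k - i) 0; first by rewrite !(mulr0, mul0r).
have ig := coef_lt_size gi0.
have ih := coef_lt_size hi0.
rewrite mulrACA -exprD -mulnDl; congr (_ * _ ^+ (_ * d)).
rewrite -!subn1; move: ig ih lik; move: (size g) (size h) => a b; lia.
Qed.

Definition Lc u : {poly B} := lead_coef (swapXY u).

Lemma LcM u v : Lc (u * v) = Lc u * Lc v.
Proof. by rewrite /Lc rmorphM lead_coefM. Qed.

Lemma size_Lc u : (size (Lc u) <= size u)%N.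
Proof.
apply/leq_sizeP => i hi; rewrite /Lc lead_coefE coef_swapXY.
by rewrite (nth_default 0 hi) coef0.
Qed.

Lemma Lc_neq0 u : u != 0 -> Lc u != 0.
Proof. by rewrite /Lc lead_coef_eq0 swapXY_eq0. Qed.

Lemma low_coefM (P Q : {poly B}) a b :
  (forall i, (i < a)%N -> P`_i = 0) -> (forall i, (i < b)%N -> Q`_i = 0) ->
  (P * Q)`_(a + b) = P`_a * Q`_b.
Proof.
move=> hP hQ; rewrite coefM.
have hab : (a < (a + b).+1)%N by lia.
rewrite (bigD1 (Ordinal hab)) //= big1 ?addr0 ?addKn //.
move=> [i hi] /= hne.
have ina : i != a.
  by apply: contraNneq hne => eia; apply/eqP/val_inj => /=.
case: (ltngtP i a) ina => // hia _.
  by rewrite hP // mul0r.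
by rewrite (hQ (a + b - i)%N) ?mulr0 //; lia.
Qed.

Lemma mono_low (P Q : {poly B}) m : P != 0 -> Q != 0 ->
  (forall i, i != m -> (P * Q)`_i = 0) ->
  forall i, (i < (size P).-1)%N -> P`_i = 0.
Proof.
move=> P0 Q0 hm.
have exP : exists i, P`_i != 0.
  by exists (size P).-1; rewrite -lead_coefE lead_coef_eq0.
have exQ : exists i, Q`_i != 0.
  by exists (size Q).-1; rewrite -lead_coefE lead_coef_eq0.
case: (ex_minnP exP) => a Pa amin.
case: (ex_minnP exQ) => b Qb bmin.
have lowP : forall i, (i < a)%N -> P`_i = 0.
  by move=> i ia; apply/eqP/negPn/negP => /amin; rewrite leqNgt ia.
have lowQ : forall i, (i < b)%N -> Q`_i = 0.
  by move=> i ia; apply/eqP/negPn/negP => /bmin; rewrite leqNgt ia.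
have h1 : (P * Q)`_(a + b) != 0 by rewrite low_coefM // mulf_neq0.
have sP : (0 < size P)%N by rewrite size_poly_gt0.
have sQ : (0 < size Q)%N by rewrite size_poly_gt0.
have h2 : (P * Q)`_((size P).-1 + (size Q).-1) != 0.
  have -> : ((size P).-1 + (size Q).-1)%N = (size (P * Q)).-1.
    rewrite size_mul //; lia.
  by rewrite -lead_coefE lead_coef_eq0 mulf_neq0.
have e1 : (a + b)%N = m.
  case: (eqVneq (a + b)%N m) => // ne.
  by move: h1; rewrite hm // eqxx.
have e2 : ((size P).-1 + (size Q).-1)%N = m.
  case: (eqVneq ((size P).-1 + (size Q).-1)%N m) => // ne.
  by move: h2; rewrite hm // eqxx.
have aP : (a <= (size P).-1)%N by apply: amin; rewrite -lead_coefE lead_coef_eq0.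
have bQ : (b <= (size Q).-1)%N by apply: bmin; rewrite -lead_coefE lead_coef_eq0.
move=> i hi; apply: lowP; lia.
Qed.

Lemma coefB_lt_size (p : {poly B}) i : p`_i != 0 -> (i < size p)%N.
Proof. by apply: contraR; rewrite -leqNgt => /(nth_default 0) ->. Qed.

Lemma Lc_dom u j S : size u`_j = S -> (0 < S)%N ->
  (forall i, i != j -> (size (u`_i)%R < S)%N) ->
  (forall i, i != j -> (Lc u)`_i = 0) /\ (Lc u)`_j != 0.
Proof.
move=> hj S0 hlt.
have hs : size (swapXY u) = S.
  apply/anti_leq/andP; split.
    apply/leq_sizeP => k hk; apply/polyP => i; rewrite coef_swapXY coef0.
    case: (eqVneq i j) => [->|ne]; apply: nth_default; first by rewrite hj.
    exact: leq_trans (ltnW (hlt i ne)) hk.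
  have : (swapXY u)`_S.-1 != 0.
    apply/eqP => h0.
    have := congr1 (fun p : {poly B} => p`_j) h0 => /=.
    rewrite coef_swapXY coef0 => /eqP.
    by rewrite -hj -lead_coefE lead_coef_eq0 -size_poly_eq0 hj => /eqP S00; move: S0; rewrite S00.
  move/coef_lt_size; rewrite prednK //.
have hL : Lc u = (swapXY u)`_S.-1 by rewrite /Lc lead_coefE hs.
split.
  move=> i ne; rewrite hL coef_swapXY nth_default //.
  by have := hlt i ne; rewrite -(prednK S0) ltnS.
rewrite hL coef_swapXY -hj -lead_coefE lead_coef_eq0 -size_poly_eq0 hj -lt0n S0 //.
Qed.

Lemma factor_bound d (f g h : {poly {poly B}}) j : f = g * h -> h != 0 ->
  (2 <= size g)%N -> f`_0 != 0 -> size (lead_coef f) = d.+1 ->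
  (forall i, i != j -> (Lc (Rw d f))`_i = 0) ->
  ((size (Lc (Rw d g))).-1 < (size g).-1)%N.
Proof.
move=> fgh h0 sg f00 hlead hmono.
have g0 : g != 0 by rewrite -size_poly_gt0; lia.
set P := Lc (Rw d g); set Q := Lc (Rw d h).
have P0 : P != 0 by apply/Lc_neq0/Rw_neq0.
have Q0 : Q != 0 by apply/Lc_neq0/Rw_neq0.
have hPQ : P * Q = Lc (Rw d f) by rewrite fgh RwM // LcM.
have mono := mono_low P0 Q0 (m := j).
rewrite hPQ in mono; have {}mono := mono hmono.
have sPg : (size P <= size g)%N := leq_trans (size_Lc _) (size_Rw _ _).
rewrite ltnNge; apply/negP => hge.
set p := (size g).-1.
have eP : (size P).-1 = p by rewrite /p; lia.
have P00 : P`_0 = 0 by apply: mono; lia.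
have Pp : P`_p != 0 by rewrite -eP -lead_coefE lead_coef_eq0.
set u := Rw d g.
set S := size (swapXY u).
have hPS : P = (swapXY u)`_S.-1 by rewrite /P /Lc lead_coefE.
have Spos : (0 < S)%N by rewrite /S size_poly_gt0 swapXY_eq0 Rw_neq0.
have h1 : (S <= size (g`_p)%R)%N.
  move: Pp; rewrite hPS coef_swapXY /u coef_Rw subnn mul0n expr0 mulr1.
  by move/coefB_lt_size; rewrite prednK.
have h2 : (size (g`_p)%R <= d.+1)%N.
  rewrite -hlead fgh lead_coefM.
  have lg0 : lead_coef g != 0 by rewrite lead_coef_eq0.
  have lh0 : lead_coef h != 0 by rewrite lead_coef_eq0.
  rewrite size_mul //.
  have : (0 < size (lead_coef h))%N by rewrite size_poly_gt0.
  rewrite /p -lead_coefE; move: (size (lead_coef g)) (size (lead_coef h)) => a b; lia.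
have g00 : g`_0 != 0 by move: f00; rewrite fgh coef0M mulf_eq0 negb_or => /andP[].
have h3 : (size (u`_0)%R <= S.-1)%N.
  apply/leq_sizeP => k hk.
  case: (eqVneq k S.-1) => [->|ne].
    by move: P00; rewrite hPS coef_swapXY.
  have kS : (S <= k)%N by lia.
  have := congr1 (fun p : {poly B} => p`_0) (nth_default 0 kS).
  by rewrite /= coef_swapXY coef0.
move: h3; rewrite /u coef_Rw subn0 size_mulXn //.
have : (0 < size (g`_0)%R)%N by rewrite size_poly_gt0.
have : (1 <= p)%N by rewrite /p; lia.
move: (size g`_0) => a hp ha h3.
have : (d <= p * d)%N by rewrite leq_pmull.
lia.
Qed.

Lemma count_bound d (ps : seq {poly {poly B}}) :
  (\prod_(g <- ps) g)%R != 0 ->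
  (forall g, g \in ps -> ((size (Lc (Rw d g))).-1 < (size g).-1)%N) ->
  ((size (Lc (Rw d ((\prod_(g <- ps) g)%R)))).-1 + size ps <=
     (size ((\prod_(g <- ps) g)%R)).-1)%N.
Proof.
elim: ps => [|g ps IH].
  rewrite big_nil => _ _ /=.
  have := leq_trans (size_Lc (Rw d 1)) (size_Rw d 1); rewrite size_poly1 /=; move: (size _) => a; lia.
rewrite big_cons mulf_eq0 negb_or => /andP[g0 F0] hall.
have := IH F0 (fun x hx => hall x (mem_behead (s := g :: ps) hx)).
have hg := hall g (mem_head _ _).
rewrite RwM // LcM size_mul ?Lc_neq0 ?Rw_neq0 // size_mul //.
have := size_poly_gt0 (Lc (Rw d g)); rewrite Lc_neq0 ?Rw_neq0 // => a1.
have := size_poly_gt0 (Lc (Rw d ((\prod_(g <- ps) g)%R))); rewrite Lc_neq0 ?Rw_neq0 // => a2.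
have := size_poly_gt0 g; rewrite g0 => a3.
have := size_poly_gt0 ((\prod_(g <- ps) g)%R); rewrite F0 => a4.
move: hg a1 a2 a3 a4; rewrite /=.
move: (size (Lc (Rw d g))) (size (Lc (Rw d ((\prod_(g <- ps) g)%R)))) (size g)
  (size ((\prod_(g <- ps) g)%R)) => x y z w; lia.
Qed.

End Key.

Lemma mconst_unit (K : fieldType) m (p : mpolyK K m) :
  mconst p -> p != 0 -> p \is a GRing.unit.
Proof.
elim: m p => [|m IH] p /=.
  by move=> _ p0; rewrite unitfE.
move=> /andP[s1 hc] p0.
rewrite poly_unitE.
have hs : size p = 1%N.
  by move: s1 p0; rewrite -size_poly_eq0; move: (size p) => [|[|]].
rewrite hs eqxx /=; apply: IH => //.
by move: p0; rewrite {1}(size1_polyC s1) polyC_eq0.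
Qed.

Lemma factor_exists (K : fieldType) m N (F : {poly {poly mpolyK K m}}) :
  (size F <= N)%N -> (2 <= size F)%N ->
  (forall d : {poly mpolyK K m}, (exists g, F = d%:P * g) -> @mconst K m.+1 d) ->
  exists ps : seq {poly {poly mpolyK K m}},
    (forall p, p \in ps -> irreducible_elt p /\ (2 <= size p)%N) /\
    F = \prod_(p <- ps) p.
Proof.
elim: N F => [|N IH] F hN h2 hprim; first by lia.
case: (classic (irreducible_elt F)) => hirr.
  by exists [:: F]; split; [move=> p; rewrite inE => /eqP ->|rewrite big_seq1].
have F0 : F != 0 by rewrite -size_poly_gt0; lia.
have Fnu : ~~ (F \is a GRing.unit).
  by rewrite poly_unitE negb_and; apply/orP; left; move: h2; case: (size F) => [|[|]].
have [q [r [Fqr [nq nr]]]] : exists q r, F = q * r /\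
    ~~ (q \is a GRing.unit) /\ ~~ (r \is a GRing.unit).
  apply: NNPP => hne; apply: hirr; split => // q r Fqr.
  case: (boolP (q \is a GRing.unit)) => hq; [by left|].
  case: (boolP (r \is a GRing.unit)) => hr; [by right|].
  by exfalso; apply: hne; exists q, r.
have q0 : q != 0 by apply: contraNneq F0 => q0; rewrite Fqr q0 mul0r.
have r0 : r != 0 by apply: contraNneq F0 => r0; rewrite Fqr r0 mulr0.
have big : forall t t', F = t * t' -> t != 0 -> ~~ (t \is a GRing.unit) ->
    (2 <= size t)%N.
  move=> t t' Ftt t0 nt; rewrite ltnNge; apply/negP => st.
  have e := size1_polyC st.
  have hc : @mconst K m.+1 t`_0 by apply: hprim; exists t'; rewrite -e.
  have t00 : t`_0 != 0 by move: t0; rewrite {1}e polyC_eq0.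
  have := mconst_unit hc t00 => ut.
  move: nt; rewrite poly_unitE ut andbT => /eqP; apply.
  by move: st t0; rewrite -size_poly_eq0; move: (size t) => [|[|]].
have sq := big q r Fqr q0 nq.
have sr := big r q (etrans Fqr (mulrC _ _)) r0 nr.
have sF : size F = (size q + size r).-1 by rewrite Fqr size_mul.
have [ps1 [h1 e1]] : exists ps : seq {poly {poly mpolyK K m}}, (forall p, p \in ps -> irreducible_elt p /\ (2 <= size p)%N) /\
    q = \prod_(p <- ps) p.
  apply: IH => //.
    by move: hN sq sr; rewrite sF; move: (size q) (size r) (size F) => a b c; lia.
  move=> d [g e]; apply: hprim; exists (g * r); by rewrite Fqr e mulrA.
have [ps2 [h2' e2]] : exists ps : seq {poly {poly mpolyK K m}}, (forall p, p \in ps -> irreducible_elt p /\ (2 <= size p)%N) /\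
    r = \prod_(p <- ps) p.
  apply: IH => //.
    by move: hN sq sr; rewrite sF; move: (size q) (size r) (size F) => a b c; lia.
  move=> d [g e]; apply: hprim; exists (g * q); by rewrite Fqr e mulrC mulrA.
exists (ps1 ++ ps2); split.
  by move=> p; rewrite mem_cat => /orP[/h1|/h2'].
by rewrite big_cat /= -e1 -e2.
Qed.

Theorem theorem10 (K : fieldType) (s : nat) (hs : (3 <= s)%N)
  (f : {poly {poly mpolyK K (s - 2)}}) (n : nat)
  (hn : n = (size f).-1) (hn2 : (2 <= n)%N)
  (ha0n : f`_0 * f`_n != 0)
  (hprim : forall d : {poly mpolyK K (s - 2)},
      (exists g : {poly {poly mpolyK K (s - 2)}}, f = d%:P * g) ->
      @mconst K (s - 2).+1 d)
  (j : nat) (hj : (j <= n - 1)%N)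
  (hdeg : f`_j != 0 /\
     forall i : nat, (i <= n)%N -> i != j -> f`_i != 0 ->
       (degv f`_i)%:Z + (j%:Z - i%:Z) * (degv f`_n)%:Z < (degv f`_j)%:Z) :
  (exists ps : seq {poly {poly mpolyK K (s - 2)}},
      [/\ (size ps <= n - j)%N, (forall p, p \in ps -> irreducible_elt p) & f = \prod_(p <- ps) p])
  /\ (j = (n - 1)%N -> irreducible_elt f).
Proof.
have sf : (2 < size f)%N by move: hn hn2; move: (size f) => a; lia.
have f0 : f != 0 by rewrite -size_poly_gt0; move: sf; move: (size f) => a; lia.
have [ps [hps hprod]] := factor_exists (leqnn (size f)) (ltnW sf) hprim.
have f00 : f`_0 != 0 by move: ha0n; rewrite mulf_eq0 negb_or => /andP[].
set d := degv f`_n.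
have hfn : f`_n = lead_coef f by rewrite lead_coefE -hn.
have ln0 : lead_coef f != 0 by rewrite lead_coef_eq0.
have hlead : size (lead_coef f) = d.+1.
  by rewrite /d /degv hfn prednK // size_poly_gt0.
have jn : (j < n)%N by lia.
have [fj0 hdeg2] := hdeg.
have [hz hnz] : (forall i, i != j -> (Lc (Rw d f))`_i = 0) /\ (Lc (Rw d f))`_j != 0.
  apply: (Lc_dom (S := ((n - j) * d + size (f`_j)%R)%N)).
  - by rewrite coef_Rw -hn size_mulXn.
  - by have := size_poly_gt0 f`_j; rewrite fj0 => h; rewrite addn_gt0 h orbT.
  - move=> i ne; rewrite coef_Rw -hn.
    have [->|fi0] := eqVneq f`_i 0.
      rewrite mul0r size_poly0.
      by have := size_poly_gt0 f`_j; rewrite fj0 => h; rewrite addn_gt0 h orbT.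
    have ilen : (i <= n)%N.
      have := coef_lt_size fi0; move: hn; move: (size f) => a; lia.
    rewrite size_mulXn //.
    have := hdeg2 i ilen ne fi0; rewrite /degv -/d.
    have pi := size_poly_gt0 f`_i; rewrite fi0 in pi.
    have pj := size_poly_gt0 f`_j; rewrite fj0 in pj.
    rewrite !mulnBl.
    have h1 : (i * d <= n * d)%N by rewrite leq_mul2r ilen orbT.
    have h2 : (j * d <= n * d)%N by rewrite leq_mul2r (ltnW jn) orbT.
    rewrite mulrBl -!PoszM.
    move: h1 h2 pi pj; move: (i * d)%N (j * d)%N (n * d)%N (size (f`_i)%R) (size (f`_j)%R).
    move=> x y z a b; lia.
have sL : size (Lc (Rw d f)) = j.+1.
  apply/anti_leq/andP; split; last exact: coefB_lt_size hnz.
  by apply/leq_sizeP => k hk; apply: hz; rewrite gtn_eqF.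
have cb := count_bound (d := d) (ps := ps).
rewrite -hprod sL /= -hn in cb.
have bnd : (size ps <= n - j)%N.
  suff : (j + size ps <= n)%N by lia.
  apply: cb => // g hg.
  have fe : f = g * \prod_(p <- rem g ps) p by rewrite hprod (big_rem _ hg).
  apply: (factor_bound (f := f) (j := j) fe) => //.
    by apply: contraNneq f0 => h0; rewrite fe h0 mulr0.
  by have [] := hps g hg.
split.
  exists ps; split => // p hp; by have [] := hps p hp.
move=> jn1; move: bnd hprod; rewrite jn1.
have -> : (n - (n - 1) = 1)%N by lia.
clear cb; case: ps hps => [|p [|q ps]] hps //=.
  rewrite big_nil => _ f1; move: sf; rewrite f1 size_poly1 //.
by rewrite big_seq1 => _ ->; have [] := hps p (mem_head _ _).
Qed.
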